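(* Let $p\in(0,\frac12)$ and $q=4p(1-p)$. Then $\eta_{KL}(Z(q))=\eta_{KL}(\mathrm{BSC}(p))=(1-2p)^2$, but $Z(q)\not\succeq_{\mathrm{l.n.}}\mathrm{BSC}(p)$.
   Context: For $q\in[0,1]$, the Z-channel $Z(q)$ has input and output alphabet $\{0,1\}$ with $Z(0|0)=1$, $Z(1|0)=0$, $Z(0|1)=q$, $Z(1|1)=1-q$. $\mathrm{BSC}(p)$ is the binary symmetric channel with crossover probability $p$. The KL contraction coefficient is $\eta_{KL}(P)=\sup_{P_X,Q_X}\frac{D(P\circ P_X\|P\circ Q_X)}{D(P_X\|Q_X)}$ (over inputs with $0<D(P_X\|Q_X)<\infty$, $P\circ P_X$ the output distribution). $P\succeq_{\mathrm{l.n.}}Q$ (less noisy) means $I(U:Y)\ge I(U:Y')$ for every finite-alphabet $U$ and every joint $P_{UX}$, with $U-X-Y$ and $U-X-Y'$ Markov chains. *)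

(* Defs.v *)
From mathcomp Require Import all_boot all_order all_algebra.
From mathcomp Require Import mathcomp_extra boolp classical_sets reals exp.
Set Implicit Arguments. Unset Strict Implicit. Unset Printing Implicit Defensive.
Import Order.TTheory GRing.Theory Num.Theory.
Local Open Scope ring_scope.
Local Open Scope classical_set_scope.

Section Info.
Variable R : realType.

Definition is_dist (T : finType) (P : T -> R) : Prop :=
  (forall x, 0 <= P x) /\ \sum_(x : T) P x = 1.

(* A channel W : X -> Y -> R, with W x y = W(y|x). *)
Definition chan (X Y : finType) := X -> Y -> R.

(* Binary alphabet {0,1} encoded as bool: 0 = false, 1 = true. *)
Definition Zch (q : R) : chan bool bool := fun x y =>
  if x then (if y then 1 - q else q) else (if y then 0 else 1).

Definition BSC (p : R) : chan bool bool := fun x y =>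
  if x == y then 1 - p else p.

Definition outd (X Y : finType) (W : chan X Y) (P : X -> R) : Y -> R :=
  fun y => \sum_(x : X) P x * W x y.

(* D(P||Q) < oo  iff  supp P is contained in supp Q. *)
Definition KL_finite (T : finType) (P Q : T -> R) : Prop :=
  forall x, 0 < P x -> 0 < Q x.

(* KL divergence (natural log; conventions 0 log 0 = 0); its value is
   meaningful when KL_finite P Q holds. *)
Definition KL (T : finType) (P Q : T -> R) : R :=
  \sum_(x : T | 0 < P x) P x * ln (P x / Q x).

Definition etaKL (X Y : finType) (W : chan X Y) : R :=
  sup [set r | exists (P Q : X -> R), [/\ is_dist P, is_dist Q,
          KL_finite P Q, 0 < KL P Q &
          r = KL (outd W P) (outd W Q) / KL P Q]].

(* Joint law of (U, Y) induced by P_UX and channel W (U - X - Y Markov). *)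
Definition joint (U X Y : finType) (W : chan X Y) (PUX : U * X -> R)
  : U * Y -> R := fun uy => \sum_(x : X) PUX (uy.1, x) * W x uy.2.

Definition margl (A B : finType) (J : A * B -> R) : A -> R :=
  fun a => \sum_(b : B) J (a, b).
Definition margr (A B : finType) (J : A * B -> R) : B -> R :=
  fun b => \sum_(a : A) J (a, b).

Definition MI (A B : finType) (J : A * B -> R) : R :=
  \sum_(ab : A * B | 0 < J ab)
     J ab * ln (J ab / (margl J ab.1 * margr J ab.2)).

Definition less_noisy (X Y Y' : finType) (W : chan X Y) (V : chan X Y') : Prop :=
  forall (U : finType) (PUX : U * X -> R), is_dist PUX ->
    MI (joint V PUX) <= MI (joint W PUX).

End Info.

(* Main.v *)
Require Import Defs.
From mathcomp Require Import all_boot all_order all_algebra.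
From mathcomp Require Import mathcomp_extra boolp classical_sets reals exp.
From mathcomp Require Import topology normedtype derive realfun.
From mathcomp Require Import ring lra.
Import Order.TTheory GRing.Theory Num.Theory.
Import numFieldNormedType.Exports.
Local Open Scope ring_scope.
Local Open Scope classical_set_scope.


Section S.
Variable R : realType.
Implicit Types x y u v : R.

Lemma ln_le_sub1 u : 0 < u -> ln u <= u - 1.
Proof.
move=> u0; have := expR_ge1Dx (ln u); rewrite lnK ?posrE //; lra.
Qed.

Lemma ln_lt_sub1 u : 0 < u -> u != 1 -> ln u < u - 1.
Proof.
move=> u0 u1; have := @expR_gt1Dx R (ln u); rewrite lnK ?posrE //.
by rewrite ln_eq0 // u1 => /(_ isT); lra.
Qed.

Lemma gibbs u v : 0 < u -> 0 < v -> u - v <= u * (ln u - ln v).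
Proof.
move=> u0 v0; have := ln_le_sub1 _ (divr_gt0 v0 u0).
rewrite ln_div ?posrE // => h.
have : u * (ln v - ln u) <= u * (v / u - 1) by rewrite ler_pM2l.
have -> : u * (v / u - 1) = v - u by field; rewrite gt_eqF.
rewrite mulrBr; lra.
Qed.

Lemma gibbs_strict u v : 0 < u -> 0 < v -> u != v -> u - v < u * (ln u - ln v).
Proof.
move=> u0 v0 uv; have := ln_lt_sub1 _ (divr_gt0 v0 u0).
rewrite ln_div ?posrE //.
have -> : (v / u != 1).
  apply/negP => /eqP h; move/eqP: uv; apply.
  by rewrite -[v](@divfK _ u) ?gt_eqF // h mul1r.
move=> /(_ isT) h.
have : u * (ln v - ln u) < u * (v / u - 1) by rewrite ltr_pM2l.
have -> : u * (v / u - 1) = v - u by field; rewrite gt_eqF.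
rewrite mulrBr; lra.
Qed.


Lemma is_derive_aff (al be x : R) : is_derive x (1:R) (fun y : R => al + be * y) be.
Proof.
apply: trigger_derive; rewrite /GRing.scale /=. 
by rewrite add0r mul1r mulr1.
Qed.

Lemma is_derive_lnaff (al be x : R) : 0 < al + be * x ->
  is_derive x (1:R) (fun y : R => ln (al + be * y)) (be / (al + be * x)).
Proof.
move=> h.
have := @is_derive1_comp _ (@ln R) (fun y => al + be * y) x _ _ (is_derive1_ln h) (is_derive_aff al be x).
by rewrite mulrC.
Qed.


Lemma is_derive_xlnx (al be c x : R) : 0 < al + be * x ->
  is_derive x (1:R) (fun y : R => (al + be * y) * (ln (al + be * y) - c))
    (be * (ln (al + be * x) - c) + be).
Proof.
move=> h.
have h1 := is_derive_aff al be x.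
have h2 := is_derive_lnaff _ _ _ h.
apply: trigger_derive.
by rewrite /GRing.scale /=; field; rewrite gt_eqF.
Qed.

Definition Tf (al be b : R) (x : R) : R :=
  (al + be * x) * (ln (al + be * x) - ln (al + be * b)) +
  ((1 - al) + (- be) * x) * (ln ((1 - al) + (- be) * x) - ln ((1 - al) + (- be) * b)).

Definition Lg (al be b : R) (x : R) : R :=
  (ln (al + be * x) - ln (al + be * b)) - (ln ((1 - al) + (- be) * x) - ln ((1 - al) + (- be) * b)).

Lemma is_derive_Tf al be b x : 0 < al + be * x -> 0 < (1 - al) + (- be) * x ->
  is_derive x (1:R) (Tf al be b) (be * Lg al be b x).
Proof.
move=> h1 h2.
have d1 := is_derive_xlnx _ _ (ln (al + be * b)) _ h1.
have d2 := is_derive_xlnx _ _ (ln ((1 - al) + (- be) * b)) _ h2.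
rewrite /Tf; apply: trigger_derive.
rewrite /Lg; ring.
Qed.

Lemma is_derive_Lg al be b x : 0 < al + be * x -> 0 < (1 - al) + (- be) * x ->
  is_derive x (1:R) (Lg al be b) (be / (al + be * x) + be / ((1 - al) + (- be) * x)).
Proof.
move=> h1 h2.
have d1 := is_derive_lnaff _ _ _ h1.
have d2 := is_derive_lnaff _ _ _ h2.
rewrite /Lg; apply: trigger_derive.
rewrite /GRing.scale /=; ring.
Qed.


Lemma mvt_in (f df : R -> R) (a b : R) : a < b ->
  (forall x, a <= x <= b -> is_derive x (1:R) f (df x)) ->
  exists2 c, a < c < b & f b - f a = df c * (b - a).
Proof.
move=> ab H.
have H1 : forall x, x \in `]a, b[%R -> is_derive x (1:R) f (df x).
  move=> x; rewrite in_itv /= => /andP[xa xb]; apply: H.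
  by rewrite !ltW.
have H2 : {within `[a, b], continuous f}.
  apply/continuous_in_subspaceT => z; rewrite inE /= in_itv /= => zab.
  apply/differentiable_continuous/derivable1_diffP.
  by case: (H z zab).
have [c cab ->] := MVT ab H1 H2.
by exists c => //; move: cab; rewrite in_itv.
Qed.
Arguments mvt_in {f df a b}.


Section P.
Variable p : R.
Hypothesis p0 : 0 < p.
Hypothesis p1 : p < 1 / 2.
Local Notation th := (1 - 2 * p).

Definition Gf c b x := c * Tf 0 1 b x - Tf p th b x.
Definition Mf c b x := c * Lg 0 1 b x - th * Lg p th b x.
Definition DM c x := c * (1 / x + 1 / (1 - x)) - th * (th / (p + th * x) + th / (1 - p - th * x)).

Lemma aff_pos x : 0 < x < 1 -> 0 < p + th * x /\ 0 < (1 - p) + (- th) * x.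
Proof.
move=> /andP[x0 x1]; have hp0 := p0; have hp1 := p1.
have q1 : 0 < 1 - p by lra.
have q2 : 0 < 1 - x by lra.
have a1 := mulr_gt0 p0 q2; have a2 := mulr_gt0 x0 q1.
have a3 := mulr_gt0 q1 q2; have a4 := mulr_gt0 p0 x0.
split; lra.
Qed.

Lemma dGf c b x : 0 < x < 1 -> is_derive x (1:R) (Gf c b) (Mf c b x).
Proof.
move=> hx; have [h1 h2] := aff_pos _ hx; move: hx => /andP[x0 x1].
have e1 : 0 < 0 + 1 * x by lra.
have e2 : 0 < (1 - 0) + (- 1) * x by lra.
have d1 := is_derive_Tf _ _ b _ e1 e2.
have d2 := is_derive_Tf _ _ b _ h1 h2.
rewrite /Gf /Mf; apply: trigger_derive.
by rewrite /GRing.scale /=; ring.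
Qed.

Lemma dMf c b x : 0 < x < 1 -> is_derive x (1:R) (Mf c b) (DM c x).
Proof.
move=> hx; have [h1 h2] := aff_pos _ hx; move: hx => /andP[x0 x1].
have e1 : 0 < 0 + 1 * x by lra.
have e2 : 0 < (1 - 0) + (- 1) * x by lra.
have d1 := is_derive_Lg _ _ b _ e1 e2.
have d2 := is_derive_Lg _ _ b _ h1 h2.
rewrite /Mf; apply: trigger_derive.
rewrite /GRing.scale /= /DM.
have -> : 1 - p + - th * x = 1 - p - th * x by ring.
have -> : 0 + 1 * x = x by ring.
have -> : 1 - 0 + - 1 * x = 1 - x by ring.
ring.
Qed.

Lemma Gf_b c b : Gf c b b = 0.
Proof. by rewrite /Gf /Tf !subrr !mulr0 !addr0 mulr0 subrr. Qed.

Lemma Mf_b c b : Mf c b b = 0.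
Proof. by rewrite /Mf /Lg !subrr !mulr0 subrr. Qed.



Lemma DM_eq c x : 0 < x < 1 ->
  DM c x = (c * ((p + th * x) * (1 - (p + th * x))) - th ^+ 2 * (x * (1 - x))) /
           ((x * (1 - x)) * ((p + th * x) * (1 - (p + th * x)))).
Proof.
move=> hx; have [h1 h2] := aff_pos _ hx; move: hx => /andP[x0 x1].
rewrite /DM; field.
have -> : 1 - (p + th * x) = 1 - p + - th * x by ring.
by apply/and4P; split; apply: lt0r_neq0 => //; lra.
Qed.

Lemma DM_ge0 x : 0 < x < 1 -> 0 <= DM (th ^+ 2) x.
Proof.
move=> hx; rewrite DM_eq //; have [h1 h2] := aff_pos _ hx; move: hx => /andP[x0 x1].
have hp0 := p0; have hp1 := p1.
apply: divr_ge0.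
  have -> : th ^+ 2 * ((p + th * x) * (1 - (p + th * x))) - th ^+ 2 * (x * (1 - x))
     = th ^+ 2 * (p * (1 - p)) * (2 * x - 1) ^+ 2 by ring.
  apply: mulr_ge0; last exact: sqr_ge0.
  apply: mulr_ge0; first exact: sqr_ge0.
  apply: mulr_ge0; lra.
have -> : 1 - (p + th * x) = 1 - p + - th * x by ring.
apply: mulr_ge0; apply: mulr_ge0; lra.
Qed.

Lemma DM_lt0 e x : 0 < e <= 1 -> 1 / 2 < x -> 2 * x - 1 < e / 2 ->
  DM (th ^+ 2 - e) x < 0.
Proof.
move=> /andP[e0 e1] xl xu.
have hp0 := p0; have hp1 := p1.
have hx : 0 < x < 1 by apply/andP; split; lra.
rewrite DM_eq //; have [h1 h2] := aff_pos _ hx; move: hx => /andP[x0 x1].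
have dpos : 0 < (x * (1 - x)) * ((p + th * x) * (1 - (p + th * x))).
  have -> : 1 - (p + th * x) = 1 - p + - th * x by ring.
  by apply: mulr_gt0; apply: mulr_gt0; lra.
rewrite pmulr_llt0 ?invr_gt0 //.
- set z := 2 * x - 1.
  have -> : (th ^+ 2 - e) * ((p + th * x) * (1 - (p + th * x))) - th ^+ 2 * (x * (1 - x))
     = (th ^+ 2 * (4 * p * (1 - p) + e) * (z * z) - e) / 4.
    by rewrite /z; field.
  rewrite pmulr_llt0 ?invr_gt0; last lra.
  have z0 : 0 < z by rewrite /z; lra.
  have z1 : z < e / 2 by [].
  have t0 : 0 <= th ^+ 2 by exact: sqr_ge0.
  have t1 : th ^+ 2 <= 1.
    rewrite expr2; have : 0 < th by lra. have : th <= 1 by lra. nra.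
  have q1 : 4 * p * (1 - p) <= 1.
    have := sqr_ge0 (1 - 2 * p); rewrite expr2; nra.
  have q0 : 0 <= 4 * p * (1 - p) by apply: mulr_ge0; [apply: mulr_ge0|]; lra.
  have zz : z * z < e * e / 4 by nra.
  have k : th ^+ 2 * (4 * p * (1 - p) + e) <= 2 by nra.
  have k2 : th ^+ 2 * (4 * p * (1 - p) + e) * (z * z) <= 2 * (z * z).
    apply: ler_wpM2r => //; exact: (mulr_ge0 (ltW z0) (ltW z0)).
  nra.
Qed.

Lemma G_ge0 a b : 0 < a < 1 -> 0 < b < 1 -> 0 <= Gf (th ^+ 2) b a.
Proof.
move=> /andP[a0 a1] /andP[b0 b1].
have dG : forall u v, 0 < u -> v < 1 -> forall x, u <= x <= v ->
    is_derive x (1:R) (Gf (th ^+ 2) b) (Mf (th ^+ 2) b x).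
  by move=> u v u0 v1 x /andP[ux xv]; apply: dGf; apply/andP; split; lra.
have dM : forall u v, 0 < u -> v < 1 -> forall x, u <= x <= v ->
    is_derive x (1:R) (Mf (th ^+ 2) b) (DM (th ^+ 2) x).
  by move=> u v u0 v1 x /andP[ux xv]; apply: dMf; apply/andP; split; lra.
case: (ltgtP a b) => [ab|ba|->]; last by rewrite Gf_b.
- have [c /andP[ac cb] eG] := mvt_in ab (dG _ _ a0 b1).
  have [d /andP[cd db] eM] := mvt_in cb (dM _ _ (lt_trans a0 ac) b1).
  have hD : 0 <= DM (th ^+ 2) d by apply: DM_ge0; apply/andP; split; lra.
  rewrite Mf_b in eM; rewrite Gf_b in eG.
  have : 0 <= DM (th ^+ 2) d * (b - c) by apply: mulr_ge0; lra.
  rewrite -eM => hM.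
  have : Mf (th ^+ 2) b c * (b - a) <= 0 by apply: mulr_le0_ge0; lra.
  lra.
- have [c /andP[bc ca] eG] := mvt_in ba (dG _ _ b0 a1).
  have [d /andP[bd dc] eM] := mvt_in bc (dM _ _ b0 (lt_trans ca a1)).
  have hD : 0 <= DM (th ^+ 2) d by apply: DM_ge0; apply/andP; split; lra.
  rewrite Mf_b in eM; rewrite Gf_b in eG.
  have : 0 <= DM (th ^+ 2) d * (c - b) by apply: mulr_ge0; lra.
  rewrite -eM => hM.
  have : 0 <= Mf (th ^+ 2) b c * (a - b) by apply: mulr_ge0; lra.
  lra.
Qed.

Lemma G_lt0 e : 0 < e <= 1 -> Gf (th ^+ 2 - e) (1 / 2) (1 / 2 + e / 8) < 0.
Proof.
move=> /andP[e0 e1].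
set x0 := 1 / 2 + e / 8.
have hx : 1 / 2 < x0 by rewrite /x0; lra.
have dG : forall u v, 0 < u -> v < 1 -> forall x, u <= x <= v ->
    is_derive x (1:R) (Gf (th ^+ 2 - e) (1 / 2)) (Mf (th ^+ 2 - e) (1 / 2) x).
  by move=> u v u0 v1 x /andP[ux xv]; apply: dGf; apply/andP; split; lra.
have dM : forall u v, 0 < u -> v < 1 -> forall x, u <= x <= v ->
    is_derive x (1:R) (Mf (th ^+ 2 - e) (1 / 2)) (DM (th ^+ 2 - e) x).
  by move=> u v u0 v1 x /andP[ux xv]; apply: dMf; apply/andP; split; lra.
have h0 : 0 < 1 / 2 :> R by lra.
have h1 : x0 < 1 by rewrite /x0; lra.
have [c /andP[c1 c2] eG] := mvt_in hx (dG _ _ h0 h1).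
have [d /andP[d1 d2] eM] := mvt_in c1 (dM _ _ h0 (lt_trans c2 h1)).
have hD : DM (th ^+ 2 - e) d < 0.
  apply: DM_lt0; [by apply/andP; split | lra | rewrite /x0 in c2; lra].
rewrite Mf_b in eM; rewrite Gf_b in eG.
have : DM (th ^+ 2 - e) d * (c - 1 / 2) < 0 by rewrite pmulr_llt0; lra.
rewrite -eM => hM.
have : Mf (th ^+ 2 - e) (1 / 2) c * (x0 - 1 / 2) < 0 by rewrite pmulr_llt0; lra.
lra.
Qed.

Definition Kf y := th ^+ 2 * (- ln (1 + (- 1) * y)) -
  (p * (ln p - ln (p + th * y)) + (1 - p) * (ln (1 - p) - ln ((1 - p) + (- th) * y))).
Definition DK y := th ^+ 2 / (1 - y) + p * th / (p + th * y) - (1 - p) * th / (1 - p - th * y).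

Lemma dKf y : 0 <= y < 1 -> is_derive y (1:R) Kf (DK y).
Proof.
move=> /andP[y0 y1]; have hp0 := p0; have hp1 := p1.
have e1 : 0 < 1 + (- 1) * y by lra.
have h1 : 0 < p + th * y by nra.
have h2 : 0 < (1 - p) + (- th) * y by nra.
have d1 := is_derive_lnaff _ _ _ e1.
have d2 := is_derive_lnaff _ _ _ h1.
have d3 := is_derive_lnaff _ _ _ h2.
rewrite /Kf; apply: trigger_derive.
rewrite /GRing.scale /= /DK.
have -> : 1 - p + - th * y = 1 - p - th * y by ring.
have -> : 1 + - 1 * y = 1 - y by ring.
field.
by apply/and3P; split; apply: lt0r_neq0 => //; lra.
Qed.

Lemma DK_ge0 y : 0 < y < 1 -> 0 <= DK y.
Proof.
move=> hy; have [h1 h2] := aff_pos _ hy; move: hy => /andP[y0 y1].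
have hp0 := p0; have hp1 := p1.
have -> : DK y = th ^+ 2 * (p * (1 - p) * (2 * y - 1) ^+ 2) /
   ((1 - y) * ((p + th * y) * (1 - p - th * y))).
  rewrite /DK; field.
  by apply/and3P; split; apply: lt0r_neq0 => //; lra.
apply: divr_ge0.
  apply: mulr_ge0; first exact: sqr_ge0.
  apply: mulr_ge0; last exact: sqr_ge0.
  apply: mulr_ge0; lra.
apply: mulr_ge0; first lra.
apply: mulr_ge0; lra.
Qed.

Lemma K_ge0 b : 0 < b < 1 -> 0 <= Kf b.
Proof.
move=> /andP[b0 b1].
have dK : forall x, 0 <= x <= b -> is_derive x (1:R) Kf (DK x).
  by move=> x /andP[x0 xb]; apply: dKf; apply/andP; split; lra.
have [c /andP[c0 cb] eK] := mvt_in b0 dK.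
have K0 : Kf 0 = 0.
  by rewrite /Kf !mulr0 !addr0 ln1 oppr0 mulr0 !subrr !mulr0 addr0 subrr.
rewrite K0 subr0 in eK; rewrite eK.
apply: mulr_ge0; last lra.
by apply: DK_ge0; apply/andP; split; lra.
Qed.

End P.
End S.
Arguments Tf {R}. Arguments Lg {R}. Arguments Gf {R}. Arguments Mf {R}.
Arguments DM {R}. Arguments Kf {R}. Arguments DK {R}.


Section K.
Variable R : realType.

Definition kd (a b : R) : R :=
  (if 0 < a then a * ln (a / b) else 0) +
  (if 0 < 1 - a then (1 - a) * ln ((1 - a) / (1 - b)) else 0).

Lemma lnD (x y : R) : 0 < x -> 0 < y -> ln (x / y) = ln x - ln y.
Proof. by move=> x0 y0; rewrite ln_div ?posrE. Qed.

Lemma dist_bool (P : bool -> R) : is_dist P -> P false = 1 - P true /\ 0 <= P true <= 1.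
Proof.
move=> [h0 h1]; rewrite big_bool /= in h1.
have := h0 true; have := h0 false; split; [lra | apply/andP; split; lra].
Qed.

Lemma KL_bool (P Q : bool -> R) : P false = 1 - P true -> Q false = 1 - Q true ->
  KL P Q = kd (P true) (Q true).
Proof. by move=> hP hQ; rewrite /KL big_mkcond big_bool /= hP hQ. Qed.

Lemma outd_bool (X : finType) (W : chan R bool X) (P : bool -> R) y :
  outd W P y = P true * W true y + P false * W false y.
Proof. by rewrite /outd big_bool. Qed.

Lemma kd_sym a b : kd (1 - a) (1 - b) = kd a b.
Proof.
rewrite /kd; have -> : 1 - (1 - a) = a by ring.
have -> : 1 - (1 - b) = b by ring.
by rewrite addrC.
Qed.

Lemma Tf_kd al be a b : 0 < al + be * a < 1 -> 0 < al + be * b < 1 ->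
  kd (al + be * a) (al + be * b) = Tf al be b a.
Proof.
move=> /andP[a0 a1] /andP[b0 b1].
rewrite /kd /Tf a0 subr_gt0 a1 !lnD //; try lra.
have -> : 1 - al + - be * a = 1 - (al + be * a) by ring.
by have -> : 1 - al + - be * b = 1 - (al + be * b) by ring.
Qed.


Lemma logsum (x1 x2 y1 y2 : R) : 0 < x1 -> 0 < x2 -> 0 < y1 -> 0 < y2 ->
  (x1 + x2) * (ln (x1 + x2) - ln (y1 + y2)) <=
  x1 * (ln x1 - ln y1) + x2 * (ln x2 - ln y2).
Proof.
move=> hx1 hx2 hy1 hy2.
set X := x1 + x2; set Y := y1 + y2.
have hX : 0 < X by rewrite /X; lra.
have hY : 0 < Y by rewrite /Y; lra.
have g1 := @gibbs R (x1 * Y) (y1 * X) (mulr_gt0 hx1 hY) (mulr_gt0 hy1 hX).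
have g2 := @gibbs R (x2 * Y) (y2 * X) (mulr_gt0 hx2 hY) (mulr_gt0 hy2 hX).
rewrite !lnM ?posrE // in g1 g2.
have : 0 <= Y * (x1 * (ln x1 - ln y1) + x2 * (ln x2 - ln y2) - X * (ln X - ln Y)).
  have -> : Y * (x1 * (ln x1 - ln y1) + x2 * (ln x2 - ln y2) - X * (ln X - ln Y)) =
    x1 * Y * (ln x1 + ln Y - (ln y1 + ln X)) + x2 * Y * (ln x2 + ln Y - (ln y2 + ln X)).
    by rewrite /X; ring.
  have : x1 * Y - y1 * X + (x2 * Y - y2 * X) = 0 by rewrite /X /Y; ring.
  lra.
by rewrite pmulr_rge0 // subr_ge0.
Qed.

Lemma z_kd (s a b : R) : 0 < s < 1 -> 0 <= a <= 1 -> 0 <= b <= 1 ->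
  (0 < a -> 0 < b) -> (0 < 1 - a -> 0 < 1 - b) ->
  kd (s * a) (s * b) <= s * kd a b.
Proof.
move=> /andP[s0 s1] /andP[a0 a1] /andP[b0 b1] hab hab'.
rewrite /kd mulrDr.
apply: lerD.
  case: (ltP 0 a) => ha.
    have hb := hab ha.
    rewrite mulr_gt0 // !lnD ?mulr_gt0 // !lnM ?posrE //.
    have -> : s * a * (ln s + ln a - (ln s + ln b)) = s * (a * (ln a - ln b)) by ring.
    exact: lexx.
  have -> : a = 0 by lra.
  have -> : s * 0 = 0 by ring.
  by rewrite ltxx.
have hsa : 0 < 1 - s * a by nra.
rewrite hsa.
case: (ltP 0 (1 - a)) => ha.
  have hb := hab' ha.
  have e1 : 1 - s * a = (1 - s) + s * (1 - a) by ring.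
  have e2 : 1 - s * b = (1 - s) + s * (1 - b) by ring.
  have hsb : 0 < 1 - s * b by nra.
  rewrite !lnD //.
  have hs1 : 0 < 1 - s by lra.
  have L := @logsum (1 - s) (s * (1 - a)) (1 - s) (s * (1 - b)) hs1 (mulr_gt0 s0 ha) hs1 (mulr_gt0 s0 hb).
  rewrite -e1 -e2 !lnM ?posrE // in L.
  lra.
have -> : a = 1 by lra.
rewrite mulr1 mulr0; apply: mulr_ge0_le0; first lra.
apply: ln_le0; rewrite ler_pdivrMr; nra.
Qed.

Section BSC.
Variable p : R.
Hypothesis p0 : 0 < p.
Hypothesis p1 : p < 1 / 2.
Local Notation th := (1 - 2 * p).

Lemma bsc_a0 b : 0 < b < 1 -> kd p (p + th * b) <= th ^+ 2 * kd 0 b.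
Proof.
move=> hb; have hp0 := p0; have hp1 := p1.
have := @K_ge0 R p p0 p1 b hb; have [h1 h2] := @aff_pos R p p0 p1 b hb.
move: hb => /andP[b0 b1].
rewrite /Kf /kd ltxx subr0 ltr01 hp0 subr_gt0.
have -> : p < 1 by lra.
rewrite !lnD ?ln1 //; try lra.
have -> : 1 - p + - th * b = 1 - (p + th * b) by ring.
have -> : 1 + - 1 * b = 1 - b by ring.
rewrite add0r mul1r sub0r.
lra.
Qed.


Lemma bsc_kd a b : 0 <= a <= 1 -> 0 < b < 1 -> kd (p + th * a) (p + th * b) <= th ^+ 2 * kd a b.
Proof.
move=> /andP[a0 a1] hb; have hp0 := p0; have hp1 := p1.
have [->|a0'] := eqVneq a 0; first by rewrite mulr0 addr0; exact: bsc_a0.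
have [->|a1'] := eqVneq a 1.
  have hb' : 0 < 1 - b < 1 by move: hb => /andP[? ?]; apply/andP; split; lra.
  have e1 : kd (p + th * 1) (p + th * b) = kd p (p + th * (1 - b)).
    by rewrite -kd_sym; congr kd; ring.
  have e2 : kd 1 b = kd 0 (1 - b) by rewrite -kd_sym; congr kd; ring.
  by rewrite e1 e2; exact: bsc_a0.
have ha : 0 < a < 1.
  by apply/andP; split; rewrite lt_neqAle ?a0 ?a1 ?andbT // eq_sym.
have := @G_ge0 R p p0 p1 a b ha hb; rewrite /Gf.
have [h1 h2] := @aff_pos R p p0 p1 a ha.
have [h3 h4] := @aff_pos R p p0 p1 b hb.
rewrite -Tf_kd; last 2 first.
- by apply/andP; split; lra.
- by apply/andP; split; lra.
rewrite -Tf_kd ?add0r ?mul1r //.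
- lra.
- by apply/andP; split; lra.
- by apply/andP; split; lra.
Qed.

End BSC.
End K.
Arguments kd {R}.
Arguments dist_bool {R P}. Arguments KL_bool {R P Q}. Arguments outd_bool {R}.
Arguments z_kd {R}. Arguments bsc_kd {R}. Arguments Tf_kd {R}. Arguments kd_sym {R}.
Arguments lnD {R}. Arguments logsum {R}.


Section E.
Variable R : realType.

Lemma sup_eq (S : set R) (c : R) : (forall r, S r -> r <= c) ->
  (forall e, 0 < e -> exists2 r, S r & c - e < r) -> sup S = c.
Proof.
move=> ub lb.
have S0 : S !=set0 by have [r Sr _] := lb 1 ltr01; exists r.
have h1 : sup S <= c by apply: ge_sup.
apply/eqP; rewrite eq_le h1 /=.
rewrite leNgt; apply/negP => hs.
have hc : 0 < c - sup S by rewrite subr_gt0.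
have [r Sr hr] := lb (c - sup S) hc.
have : r <= sup S by apply: ub_le_sup => //; exists c.
lra.
Qed.

Lemma kd_aa (a : R) : kd a a = 0.
Proof.
rewrite /kd; case: ifP => h1; case: ifP => h2;
  rewrite ?divff ?ln1 ?mulr0 ?add0r ?addr0 //; apply: lt0r_neq0 => //.
Qed.


Theorem etaZ (p : R) : 0 < p -> p < 1 / 2 ->
  etaKL (Zch (4 * p * (1 - p))) = (1 - 2 * p) ^+ 2.
Proof.
move=> p0 p1.
set s := (1 - 2 * p) ^+ 2.
have hs0 : 0 < s by rewrite /s expr2; nra.
have hs1 : s < 1 by rewrite /s expr2; nra.
have hq : 4 * p * (1 - p) = 1 - s by rewrite /s; ring.
have outT : forall P : bool -> R, outd (Zch (4 * p * (1 - p))) P true = s * P true.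
  by move=> P; rewrite outd_bool /Zch hq; ring.
have outF : forall P : bool -> R, is_dist P ->
    outd (Zch (4 * p * (1 - p))) P false = 1 - outd (Zch (4 * p * (1 - p))) P true.
  move=> P hP; have [hf _] := dist_bool hP.
  by rewrite outT outd_bool /Zch hq hf; ring.
apply: sup_eq.
- move=> r [P [Q [hP hQ hPQ hK ->]]].
  have [hPf hPa] := dist_bool hP; have [hQf hQa] := dist_bool hQ.
  rewrite (KL_bool hPf hQf) in hK *.
  rewrite (KL_bool (outF _ hP) (outF _ hQ)) !outT.
  rewrite ler_pdivrMr //.
  apply: z_kd => //; first by apply/andP.
  + by apply: hPQ.
  + by rewrite -hPf -hQf; apply: hPQ.
- move=> e e0.
  set b := e / (e + 2).
  have b0 : 0 < b by rewrite /b divr_gt0 //; lra.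
  have b1 : b < 1 by rewrite /b ltr_pdivrMr; lra.
  have sb : s * b < e.
    have : b < e by rewrite /b ltr_pdivrMr; nra.
    nra.
  pose P := fun x : bool => if x then 0 else 1 : R.
  pose Q := fun x : bool => if x then b else 1 - b.
  have hP : is_dist P by split; [case; rewrite /P /=; lra | rewrite big_bool /P /=; lra].
  have hQ : is_dist Q by split; [case; rewrite /Q /=; lra | rewrite big_bool /Q /=; lra].
  have eK : KL P Q = - ln (1 - b).
    rewrite (KL_bool (P:=P) (Q:=Q)); last 2 first.
    - by rewrite /P /= subr0.
    - by [].
    rewrite /kd /P /Q /= ltxx subr0 ltr01 mul1r lnD ?ln1; lra.
  have eO : KL (outd (Zch (4 * p * (1 - p))) P) (outd (Zch (4 * p * (1 - p))) Q)
      = - ln (1 - s * b).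
    rewrite (KL_bool (outF _ hP) (outF _ hQ)) !outT /kd /= mulr0 ltxx subr0 ltr01 mul1r.
    rewrite lnD ?ln1; nra.
  have L1 : 0 < - ln (1 - b) by rewrite oppr_gt0; apply: ln_lt0; apply/andP; split; lra.
  have L1' : - ln (1 - b) * (1 - b) <= b.
    have hb1 : 0 < 1 - b by lra.
    have hb2 : 0 < (1 - b)^-1 by rewrite invr_gt0.
    have h := @ln_le_sub1 R ((1 - b)^-1) hb2.
    rewrite lnV ?posrE // in h.
    have : - ln (1 - b) * (1 - b) <= ((1 - b)^-1 - 1) * (1 - b).
      by rewrite ler_wpM2r //; lra.
    by rewrite mulrBl mulVf ?gt_eqF //; lra.
  have L2 : s * b <= - ln (1 - s * b).
    have hsb : 0 < 1 - s * b by nra.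
    have := @ln_le_sub1 R (1 - s * b) hsb.
    lra.
  exists ((- ln (1 - s * b)) / (- ln (1 - b))).
    exists P, Q; split => //.
    - by case; rewrite /P /Q /= => h; lra.
    - by rewrite eK.
    - by rewrite eO eK.
  rewrite ltr_pdivlMr //.
  have [se|se] := leP (s - e) 0.
    have : (s - e) * - ln (1 - b) <= 0 by apply: mulr_le0_ge0 => //; lra.
    nra.
  have : (s - e) * (- ln (1 - b) * (1 - b)) <= (s - e) * b by rewrite ler_pM2l.
  nra.
Qed.


Theorem etaBSC (p : R) : 0 < p -> p < 1 / 2 ->
  etaKL (BSC p) = (1 - 2 * p) ^+ 2.
Proof.
move=> p0 p1.
have outT : forall P : bool -> R, is_dist P ->
    outd (BSC p) P true = p + (1 - 2 * p) * P true.
  move=> P hP; have [hf _] := dist_bool hP.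
  by rewrite outd_bool /BSC /= hf; ring.
have outF : forall P : bool -> R, is_dist P ->
    outd (BSC p) P false = 1 - outd (BSC p) P true.
  move=> P hP; have [hf _] := dist_bool hP.
  by rewrite outT // outd_bool /BSC /= hf; ring.
apply: sup_eq.
- move=> r [P [Q [hP hQ hPQ hK ->]]].
  have [hPf hPa] := dist_bool hP; have [hQf hQa] := dist_bool hQ.
  rewrite (KL_bool hPf hQf) in hK *.
  rewrite (KL_bool (outF _ hP) (outF _ hQ)) !outT //.
  rewrite ler_pdivrMr //.
  apply: bsc_kd => //.
  move: hQa => /andP[hb0 hb1].
  have f1 := hPQ true; have f2 := hPQ false; rewrite hPf hQf in f2.
  apply/andP; split.
    rewrite lt_neqAle hb0 andbT; apply/negP => /eqP hb.
    move: hPa => /andP[ha0 ha1].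
    have ha : P true = 0.
      apply/eqP; rewrite eq_le ha0 andbT leNgt; apply/negP => /f1; rewrite -hb ltxx.
      done.
    by move: hK; rewrite ha -hb kd_aa ltxx.
  rewrite lt_neqAle hb1 andbT; apply/negP => /eqP hb.
  move: hPa => /andP[ha0 ha1].
  have ha : P true = 1.
    apply/eqP; rewrite eq_le ha1 /= leNgt; apply/negP => h.
    have := f2; rewrite subr_gt0 => /(_ h); rewrite hb subrr ltxx.
    done.
  by move: hK; rewrite ha hb kd_aa ltxx.
- move=> e e0.
  set e' := e / (e + 1).
  have e'0 : 0 < e' by rewrite /e' divr_gt0 //; lra.
  have e'1 : e' <= 1 by rewrite /e' ler_pdivrMr; lra.
  have e'e : e' <= e by rewrite /e' ler_pdivrMr; nra.
  have he' : 0 < e' <= 1 by apply/andP.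
  set a0 := 1 / 2 + e' / 8.
  have ha : 0 < a0 < 1 by apply/andP; split; rewrite /a0; lra.
  have hb : 0 < (1 / 2 : R) < 1 by apply/andP; split; lra.
  pose P := fun x : bool => if x then a0 else 1 - a0.
  pose Q := fun x : bool => if x then 1 / 2 else 1 - 1 / 2 : R.
  have hP : is_dist P by split; [case; rewrite /P /=; lra | rewrite big_bool /P /=; lra].
  have hQ : is_dist Q by split; [case; rewrite /Q /=; lra | rewrite big_bool /Q /=; lra].
  have eK : KL P Q = Tf 0 1 (1 / 2) a0.
    rewrite (KL_bool (P:=P) (Q:=Q)) //.
    have e1 : 0 + 1 * a0 = a0 by ring.
    have e2 : 0 + 1 * (1 / 2) = 1 / 2 :> R by ring.
    have := @Tf_kd R 0 1 a0 (1 / 2); rewrite e1 e2 => <- //.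
  have [h1 h2] := @aff_pos R p p0 p1 a0 ha.
  have [h3 h4] := @aff_pos R p p0 p1 (1/2) hb.
  have eO : KL (outd (BSC p) P) (outd (BSC p) Q) = Tf p (1 - 2 * p) (1 / 2) a0.
    rewrite (KL_bool (outF _ hP) (outF _ hQ)) !outT // -Tf_kd //.
    + by apply/andP; split; lra.
    + by apply/andP; split; lra.
  have G1 := @G_lt0 R p p0 p1 e' he'.
  have G2 := @G_ge0 R p p0 p1 a0 (1/2) ha hb.
  rewrite /Gf -/a0 in G1 G2.
  have T1 : 0 < Tf 0 1 (1 / 2) a0.
    have : 0 < e' * Tf 0 1 (1 / 2) a0 by lra.
    by rewrite pmulr_rgt0.
  exists (Tf p (1 - 2 * p) (1 / 2) a0 / Tf 0 1 (1 / 2) a0).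
    exists P, Q; split => //.
    - by case; rewrite /P /Q /= => h; lra.
    - by rewrite eK.
    - by rewrite eO eK.
  rewrite ltr_pdivlMr //.
  have : (e - e') * Tf 0 1 (1 / 2) a0 >= 0 by apply: mulr_ge0; lra.
  lra.
Qed.

End E.


Ltac nz := repeat (apply/andP; split); apply: lt0r_neq0; lra.

Section LN.
Variable R : realType.

Lemma sum_pair (F : bool * bool -> R) :
  \sum_(ab : bool * bool) F ab = F (true, true) + F (true, false) + (F (false, true) + F (false, false)).
Proof.
rewrite (eq_bigr (fun ab => F (ab.1, ab.2))); last by case.
by rewrite -(pair_bigA _ (fun i j => F (i, j))) !big_bool.
Qed.

Definition PUX (t : R) : bool * bool -> R :=
  fun ux => if ux.1 == ux.2 then (if ux.1 then 1 - t else t) else 0.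

Lemma PUX_dist t : 0 < t < 1 -> is_dist (PUX t).
Proof.
move=> /andP[t0 t1]; split.
  by case=> [[] []] /=; rewrite /PUX /=; lra.
rewrite sum_pair /PUX /=; ring.
Qed.

Lemma MI_Z (q t : R) : 0 < q < 1 -> 0 < t < 1 -> MI (joint (Zch q) (PUX t)) <= - t * ln q.
Proof.
move=> /andP[q0 q1] /andP[t0 t1].
rewrite /MI big_mkcond sum_pair /margl /margr /joint /PUX /Zch /= !big_bool /=.
rewrite !(mul0r, mulr0, addr0, add0r, mulr1) ltxx ?addr0 ?add0r.
have h1 : 0 < (1 - t) * (1 - q) by apply: mulr_gt0; lra.
have h2 : 0 < (1 - t) * q by apply: mulr_gt0; lra.
rewrite h1 h2 t0.
set c := (1 - t) * q + t.
have c0 : 0 < c by rewrite /c; lra.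
have e1 : (1 - t) * (1 - q) + (1 - t) * q = 1 - t by ring.
rewrite e1.
have r1 : (1 - t) * (1 - q) / ((1 - t) * ((1 - t) * (1 - q))) = (1 - t)^-1.
  by field; nz.
have r2 : (1 - t) * q / ((1 - t) * c) = q / c.
  by field; nz.
have r3 : t / (t * c) = c^-1.
  by field; nz.
have ht : 0 < 1 - t by lra.
have hq : 0 < 1 - q by lra.
rewrite r1 r2 r3 !lnV ?posrE // lnD //.
have g1 := @gibbs R _ _ c0 q0.
have g2 := @gibbs R _ _ h1 hq.
rewrite lnM ?posrE // in g2.
have : 1 - c = (1 - t) * (1 - q) by rewrite /c; ring.
rewrite /c in g1 *.
nra.
Qed.


Lemma MI_BSC (p t : R) : 0 < p < 1 -> 0 < t < 1 ->
  t * (1 - 2 * p) * (ln (1 - (p + (1 - 2 * p) * t)) - ln (p + (1 - 2 * p) * t))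
  <= MI (joint (BSC p) (PUX t)).
Proof.
move=> /andP[p0 p1] /andP[t0 t1].
rewrite /MI big_mkcond sum_pair /margl /margr /joint /PUX /BSC /= !big_bool /=.
rewrite !(mul0r, mulr0, addr0, add0r, mulr1) ?addr0 ?add0r.
have hp : 0 < 1 - p by lra.
have ht : 0 < 1 - t by lra.
rewrite !mulr_gt0 //.
set m := p + (1 - 2 * p) * t.
have m0 : 0 < m by rewrite /m; nra.
have m1 : 0 < 1 - m by rewrite /m; nra.
have r1 : (1 - t) * (1 - p) / (((1 - t) * (1 - p) + (1 - t) * p) * ((1 - t) * (1 - p) + t * p))
   = (1 - p) / (1 - m).
  have -> : (1 - t) * (1 - p) + t * p = 1 - m by rewrite /m; ring.
  by field; nz.
have r2 : (1 - t) * p / (((1 - t) * (1 - p) + (1 - t) * p) * ((1 - t) * p + t * (1 - p)))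
   = p / m.
  have -> : (1 - t) * p + t * (1 - p) = m by rewrite /m; ring.
  by field; nz.
have r3 : t * p / ((t * p + t * (1 - p)) * ((1 - t) * (1 - p) + t * p)) = p / (1 - m).
  have -> : (1 - t) * (1 - p) + t * p = 1 - m by rewrite /m; ring.
  by field; nz.
have r4 : t * (1 - p) / ((t * p + t * (1 - p)) * ((1 - t) * p + t * (1 - p))) = (1 - p) / m.
  have -> : (1 - t) * p + t * (1 - p) = m by rewrite /m; ring.
  by field; nz.
rewrite r1 r2 r3 r4 !lnD //.
have g1 := @gibbs R _ _ p0 m0.
have g2 := @gibbs R _ _ hp m1.
rewrite /m in g1 g2 *.
nra.
Qed.


Lemma ln_diff_le (x y : R) : 0 < x -> 0 < y -> ln x - ln y <= x / y - 1.
Proof. by move=> x0 y0; rewrite -lnD //; apply: ln_le_sub1; apply: divr_gt0. Qed.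

Theorem not_less_noisy (p : R) : 0 < p -> p < 1 / 2 ->
  ~ less_noisy (Zch (4 * p * (1 - p))) (BSC p).
Proof.
move=> p0 p1 H.
have hp : 0 < 1 - p by lra.
have hq : 0 < 4 * p * (1 - p) by apply: mulr_gt0; lra.
have hq1 : 4 * p * (1 - p) < 1.
  have : 0 < (1 - 2 * p) * (1 - 2 * p) by apply: mulr_gt0; lra.
  nra.
set q := 4 * p * (1 - p).
have l4 : ln (4 : R) = ln 2 + ln 2.
  rewrite -lnM ?posrE //; congr ln; ring.
have lnq : ln q = ln 2 + ln 2 + ln p + ln (1 - p).
  by rewrite /q !lnM ?posrE ?l4 //; lra.
set F := (1 - 2 * p) * (ln (1 - p) - ln p) + ln q.
have hF : 0 < F.
  have h2 : 0 < 1 / 2 :> R by lra.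
  have pn : p != 1 / 2 by rewrite lt_eqF.
  have g1 := @gibbs_strict R p (1 / 2) p0 h2 pn.
  have g2 := @gibbs R (1 - p) (1 / 2) hp h2.
  have l2 : ln (1 / 2 : R) = - ln 2 by rewrite div1r lnV ?posrE.
  rewrite l2 in g1 g2.
  rewrite /F lnq.
  lra.
set t := p * F / (4 * (1 + F)).
have t0 : 0 < t by rewrite /t divr_gt0 //; [apply: mulr_gt0 | ]; lra.
have tF : t * (4 * (1 + F)) = p * F by rewrite /t; field; nz.
have t1 : t < 1 / 2 by nra.
have ht : 0 < t < 1 by apply/andP; split; lra.
set m := p + (1 - 2 * p) * t.
have m0 : 0 < m by rewrite /m; nra.
have m1 : m < 1 / 2 by rewrite /m; nra.
have hm : 0 < 1 - m by lra.
have hp1 : 0 < p < 1 by apply/andP; split; lra.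
have hB := MI_BSC _ _ hp1 ht.
have hq2 : 0 < q < 1 by apply/andP; split.
have hZ := MI_Z _ _ hq2 ht.
have hH := H bool (PUX t) (PUX_dist _ ht).
have D := ln_diff_le _ _ (mulr_gt0 m0 hp) (mulr_gt0 p0 hm).
rewrite !lnM ?posrE // in D.
have key : m * (1 - p) / (p * (1 - m)) - 1 = (1 - 2 * p) * t / (p * (1 - m)).
  have hm' : 0 < 1 - (p + (1 - 2 * p) * t) by exact: hm.
  by rewrite /m; field; nz.
rewrite key -/m in D.
have bnd : (1 - 2 * p) * ((1 - 2 * p) * t / (p * (1 - m))) < F.
  have hd : 0 < p * (1 - m) by apply: mulr_gt0.
  rewrite mulrA ltr_pdivrMr //.
  have a1 : (1 - 2 * p) * (1 - 2 * p) <= 1 by nra.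
  have a2 : (1 - 2 * p) * (1 - 2 * p) * t <= t by nra.
  have b0 : 0 < t * F by apply: mulr_gt0.
  have b1 : t * 4 < p * F by nra.
  have b3 : 0 < (F * p) * (1 / 2 - m) by apply: mulr_gt0; [apply: mulr_gt0|]; lra.
  have b4 : 0 < F * p by apply: mulr_gt0.
  nra.
have c1 : - ln q < (1 - 2 * p) * (ln (1 - m) - ln m).
  have : (1 - 2 * p) * (ln (1 - p) - ln p - (1 - 2 * p) * t / (p * (1 - m)))
      <= (1 - 2 * p) * (ln (1 - m) - ln m).
    by rewrite ler_pM2l; lra.
  rewrite /F in bnd; lra.
have c2 : t * (- ln q) < t * ((1 - 2 * p) * (ln (1 - m) - ln m)) by rewrite ltr_pM2l.
rewrite -/q -/m in hB hZ hH.
lra.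
Qed.

End LN.

Local Close Scope classical_set_scope.

Theorem mainTheorem9 (R : realType) (p : R) :
  0 < p -> p < 1 / 2 ->
  [/\ etaKL (Zch (4 * p * (1 - p))) = (1 - 2 * p) ^+ 2,
      etaKL (BSC p) = (1 - 2 * p) ^+ 2 &
      ~ less_noisy (Zch (4 * p * (1 - p))) (BSC p)].
Proof.
move=> p0 p1; split.
- exact: etaZ.
- exact: etaBSC.
- exact: not_less_noisy.
Qed.
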